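(* Let $n\ge 1$ and let $\Sigma_0=(1\,2)(3\,4)\cdots(2n-1\,\,2n)\in S_{2n}$. Let $S_n[S_2]=\{\xi\in S_{2n}:\ \xi\Sigma_0\xi^{-1}=\Sigma_0\}$. Then for every $\sigma\in S_{2n}$ there exist $\xi\in S_n[S_2]$ and $\tau\in S_n$ such that $$\xi^{-1}\,\sigma^{-1}\Sigma_0\sigma\,\xi=(1\ \ 2\tau(1))\,(3\ \ 2\tau(2))\cdots(2n-1\ \ 2\tau(n)),$$ i.e. $\xi^{-1}\sigma^{-1}\Sigma_0\sigma\xi=\prod_{i=1}^n(2i-1,\ 2\tau(i))$.
   Context: $S_m$ denotes the symmetric group on $\{1,\dots,m\}$. The subgroup $S_n[S_2]$ (the wreath product, or hyperoctahedral group, of order $2^n n!$) is the centraliser of the fixed-point-free involution $\Sigma_0$ in $S_{2n}$. In the paper's notation $i^-=2i-1$, $i^+=2i$, so the target permutation is $(1^-\,\tau(1)^+)\cdots(n^-\,\tau(n)^+)$. *)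

(* Defs.v *)
(* Points {1,...,2n} are encoded 0-based as 'I_(n.*2):
   paper's i^- = 2i-1 is lo (i-1) = 2(i-1), paper's i^+ = 2i is hi (i-1) = 2(i-1)+1. *)
From mathcomp Require Import all_boot all_fingroup.
Set Implicit Arguments. Unset Strict Implicit. Unset Printing Implicit Defensive.

Local Open Scope group_scope.

Lemma lo_proof (n : nat) (k : 'I_n) : (val k).*2 < n.*2.
Proof. by rewrite ltn_double ltn_ord. Qed.

Lemma hi_proof (n : nat) (k : 'I_n) : ((val k).*2).+1 < n.*2.
Proof. by rewrite -doubleS leq_double ltn_ord. Qed.

Definition lo (n : nat) (k : 'I_n) : 'I_(n.*2) := Ordinal (lo_proof k).
Definition hi (n : nat) (k : 'I_n) : 'I_(n.*2) := Ordinal (hi_proof k).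

Definition Sigma0 (n : nat) : 'S_(n.*2) := \prod_(k < n) tperm (lo k) (hi k).

Definition wreath (n : nat) : {set 'S_(n.*2)} :=
  [set xi : 'S_(n.*2) | xi * Sigma0 n * xi^-1 == Sigma0 n].

Definition target (n : nat) (tau : 'S_n) : 'S_(n.*2) :=
  \prod_(k < n) tperm (lo k) (hi (tau k)).

(* Main.v *)
Require Import Defs.
From mathcomp Require Import all_boot all_fingroup.
Set Implicit Arguments. Unset Strict Implicit. Unset Printing Implicit Defensive.
Local Open Scope group_scope.

Section Prod.
Variables (m : nat) (T : finType) (a b : 'I_m -> T).
Hypotheses (ai : injective a) (bi : injective b) (ab : forall i j, a i != b j).

Lemma prod_tperm_seq (s : seq 'I_m) : uniq s -> forall i,
  (i \in s -> (\prod_(k <- s) tperm (a k) (b k)) (a i) = b i /\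
              (\prod_(k <- s) tperm (a k) (b k)) (b i) = a i) /\
  (i \notin s -> (\prod_(k <- s) tperm (a k) (b k)) (a i) = a i /\
              (\prod_(k <- s) tperm (a k) (b k)) (b i) = b i).
Proof.
elim: s => [|j s IH] /= Hu i; first by rewrite big_nil !perm1.
case/andP: Hu => js us; have {}IH := IH us.
rewrite big_cons !permM in_cons.
have [->|ij] := eqVneq i j.
  rewrite /=; split=> // _.
  rewrite tpermL tpermR; move: (IH j) => [_ H]; have [H1 H2] := H js; by rewrite H1 H2.
rewrite /=; have aij : a i != a j by apply: contra ij => /eqP /ai ->.
have bij : b i != b j by apply: contra ij => /eqP /bi ->.
rewrite !tpermD // ?ab // 1?eq_sym ?ab //; by have [H1 H2] := IH i.
Qed.

Lemma prod_tperm i : (\prod_(k < m) tperm (a k) (b k)) (a i) = b i /\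
              (\prod_(k < m) tperm (a k) (b k)) (b i) = a i.
Proof. by have [H _] := prod_tperm_seq (index_enum_uniq _) i; apply: H; rewrite mem_index_enum. Qed.
End Prod.
Section Main.
Variable n : nat.
Local Notation N := (n.*2).

Lemma blk_proof (y : 'I_N) : (val y)./2 < n.
Proof. by rewrite ltn_half_double ltn_ord. Qed.
Definition blk (y : 'I_N) : 'I_n := Ordinal (blk_proof y).

Lemma decomp (y : 'I_N) : y = if odd y then hi (blk y) else lo (blk y).
Proof.
have := odd_double_half y; case: (odd y) => /= H; apply: val_inj => /=;
  by rewrite -[in LHS]H.
Qed.

Lemma lo_inj : injective (@lo n).
Proof. by move=> i j /(congr1 val) /= /(congr1 half); rewrite !doubleK => /val_inj. Qed.
Lemma hi_inj : injective (@hi n).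
Proof. by move=> i j /(congr1 val) /= [] /(congr1 half); rewrite !doubleK => /val_inj. Qed.
Lemma odd_lo k : odd (@lo n k) = false. Proof. by rewrite /= odd_double. Qed.
Lemma odd_hi k : odd (@hi n k) = true. Proof. by rewrite /= odd_double. Qed.
Lemma lo_hi i j : @lo n i != hi j.
Proof. by apply/negP => /eqP /(congr1 (fun y : 'I_N => odd y)); rewrite odd_lo odd_hi. Qed.

Lemma decompP (y : 'I_N) : (exists k, y = lo k) \/ (exists k, y = hi k).
Proof. by rewrite (decomp y); case: odd; [right|left]; eexists. Qed.

Lemma S0lo k : Sigma0 n (lo k) = hi k.
Proof. by have [] := prod_tperm lo_inj hi_inj lo_hi k. Qed.
Lemma S0hi k : Sigma0 n (hi k) = lo k.
Proof. by have [] := prod_tperm lo_inj hi_inj lo_hi k. Qed.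

Lemma S0K y : Sigma0 n (Sigma0 n y) = y.
Proof. by case: (decompP y) => [[k ->]|[k ->]]; [rewrite S0lo S0hi|rewrite S0hi S0lo]. Qed.
Lemma S0odd y : odd (Sigma0 n y) = ~~ odd y.
Proof. by case: (decompP y) => [[k ->]|[k ->]]; rewrite ?S0lo ?S0hi ?odd_lo ?odd_hi. Qed.
Lemma S0neq y : Sigma0 n y != y.
Proof. by apply/negP => /eqP /(congr1 (fun y : 'I_N => odd y)); rewrite S0odd; case: (odd y). Qed.

Lemma targ_lo (tau : 'S_n) k : target tau (lo k) = hi (tau k).
Proof.
have bi : injective (fun k => hi (tau k)) by move=> i j /hi_inj /perm_inj.
by have [] := prod_tperm lo_inj bi (fun i j => lo_hi i (tau j)) k.
Qed.
Lemma targ_hi (tau : 'S_n) k : target tau (hi (tau k)) = lo k.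
Proof.
have bi : injective (fun k => hi (tau k)) by move=> i j /hi_inj /perm_inj.
by have [] := prod_tperm lo_inj bi (fun i j => lo_hi i (tau j)) k.
Qed.

Variable sigma : 'S_N.
Let S0 := Sigma0 n.
Let Q : 'S_N := sigma^-1 * S0 * sigma.
Let R : 'S_N := S0 * Q.

Lemma QE y : Q y = sigma (S0 (sigma^-1 y)).
Proof. by rewrite /Q !permM. Qed.
Lemma QK y : Q (Q y) = y.
Proof. by rewrite !QE permK /S0 S0K permKV. Qed.
Lemma Qneq y : Q y != y.
Proof.
rewrite QE; apply/negP => /eqP H.
by move: (S0neq (sigma^-1 y)); rewrite -{2}H permK eqxx.
Qed.
Lemma RE y : R y = Q (S0 y). Proof. by rewrite /R permM. Qed.

Lemma notorb k : forall x, S0 x != (R ^+ k) x.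
Proof.
elim: k {-2}k (leqnn k) => [|K IH] k hk x.
  by move: hk; rewrite leqn0 => /eqP ->; rewrite expg0 perm1 S0neq.
case: k hk => [|[|k]] hk.
- by rewrite expg0 perm1 S0neq.
- rewrite expg1 RE; apply/negP => /eqP H.
  by move: (Qneq (S0 x)); rewrite -H eqxx.
- apply/negP => /eqP H.
  have H1 : S0 x = R (S0 (R x)) by rewrite RE /S0 S0K QE (RE x) QE permK /S0 S0K permKV.
  have H2 : (R ^+ k.+2) x = R ((R ^+ k) (R x)).
    by rewrite expgSr permM; congr (R _); rewrite expgS permM.
  move: H; rewrite H1 H2 => /perm_inj /eqP.
  by apply/negP; apply: IH; rewrite -ltnS (leq_trans _ hk).
Qed.

Definition col (x : 'I_N) : bool :=
  (enum_rank (porbit R x) < enum_rank (porbit R (S0 x)))%N.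

Lemma orbneq x : porbit R x != porbit R (S0 x).
Proof.
apply/negP => /eqP H.
have : S0 x \in porbit R x by rewrite H porbit_id.
by case/porbitP => i /eqP; apply/negP; apply: notorb.
Qed.

Lemma colS0 x : col (S0 x) = ~~ col x.
Proof.
rewrite /col /S0 S0K -/S0.
have neq : enum_rank (porbit R (S0 x)) != enum_rank (porbit R x).
  apply/negP => /eqP /enum_rank_inj /eqP; by rewrite eq_sym (negbTE (orbneq x)).
by rewrite ltn_neqAle neq leqNgt.
Qed.

Lemma colQ x : col (Q x) = ~~ col x.
Proof.
have e1 : porbit R (Q x) = porbit R (S0 x).
  have -> : Q x = (R ^+ 1) (S0 x) by rewrite expg1 RE /S0 S0K.
  by rewrite porbit_perm.
have e2 : porbit R (S0 (Q x)) = porbit R x.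
  have e : x = (R ^+ 1) (S0 (Q x)) by rewrite expg1 RE /S0 S0K QK.
  by rewrite {2}e porbit_perm.
by rewrite -colS0 /col e1 e2 /S0 S0K.
Qed.

Definition xif (x : 'I_N) := if col x == odd x then S0 x else x.

Lemma xif_S0 x : xif (S0 x) = S0 (xif x).
Proof.
rewrite /xif colS0 {1}/S0 S0odd (inj_eq negb_inj).
by case: ifP.
Qed.

Lemma xif_inj : injective xif.
Proof.
move=> x y; rewrite /xif.
case: ifP => hx; case: ifP => hy.
- exact: perm_inj.
- move=> e; move: hy; rewrite -e /S0 colS0 S0odd (inj_eq negb_inj) -/S0 hx //.
- move=> e; move: hx; rewrite e /S0 colS0 S0odd (inj_eq negb_inj) -/S0 hy //.
- by [].
Qed.

Definition xi : 'S_N := perm xif_inj.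

Lemma xi_odd x : odd (xi x) = ~~ col x.
Proof.
rewrite permE /xif; case: ifP => /eqP h; first by rewrite /S0 S0odd h.
by case: (col x) h; case: (odd x).
Qed.

Lemma xi_S0 x : xi (S0 x) = S0 (xi x).
Proof. by rewrite !permE xif_S0. Qed.

Lemma xi_wreath : xi \in wreath n.
Proof.
rewrite inE; apply/eqP/permP => z; rewrite !permM -/S0.
by rewrite -xi_S0 -permM mulgV perm1.
Qed.

Lemma main_sec : exists2 xi : 'S_(n.*2), xi \in wreath n &
    exists tau : 'S_n,
      (xi^-1 * sigma^-1 * Sigma0 n * sigma * xi)%g = target tau.
Proof.
exists xi; first exact: xi_wreath.
set T := (xi^-1 * sigma^-1 * Sigma0 n * sigma * xi)%g.
have TE y : T y = xi (Q (xi^-1 y)) by rewrite QE /T !permM.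
have TK y : T (T y) = y by rewrite !TE permK QK permKV.
have Tlo k : odd (T (lo k)) by
  rewrite TE xi_odd colQ negbK -[col _]negbK -xi_odd permKV odd_lo.
pose f k := blk (T (lo k)).
have Tlo' k : T (lo k) = hi (f k).
  by rewrite {1}(decomp (T (lo k))) Tlo.
have finj : injective f.
  move=> i j e; have : T (lo i) = T (lo j) by rewrite !Tlo' e.
  by move/(congr1 T); rewrite !TK => /lo_inj.
have pE k : perm finj k = f k by rewrite permE.
exists (perm finj); apply/permP => y.
case: (decompP y) => [[k ->]|[j ->]].
  by rewrite targ_lo pE Tlo'.
have -> : j = perm finj ((perm finj)^-1 j) by rewrite permKV.
by rewrite targ_hi pE -Tlo' TK.
Qed.
End Main.

Theorem lemma1 (n : nat) (hn : 0 < n) (sigma : 'S_(n.*2)) :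
  exists2 xi : 'S_(n.*2), xi \in wreath n &
    exists tau : 'S_n,
      (xi^-1 * sigma^-1 * Sigma0 n * sigma * xi)%g = target tau.
Proof. exact: main_sec. Qed.
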